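(* Let $(\Omega,\mathbb Z^N,\alpha)$ be a dynamical system and $\omega\in\Omega$. Then $L(\omega)=\bigcup_{\eta\in S^{N-1}}L^\eta(\omega)$.
   Context: A dynamical system $(\Omega,\mathbb Z^N,\alpha)$: $\Omega$ compact metric space, $\alpha$ maps $\mathbb Z^N$ to homeomorphisms of $\Omega$ with $\alpha(g+h)=\alpha(g)\circ\alpha(h)$. $g_n\to\infty$ means $(g_n)$ eventually leaves every finite subset of $\mathbb Z^N$. $L(\omega)=\{\nu\in\Omega:\exists g_n\to\infty,\ \alpha(g_n)(\omega)\to\nu\}$. $S^{N-1}=\{\eta\in\mathbb R^N:|\eta|=1\}$. For $R>0$ and an open neighbourhood $U\subseteq S^{N-1}$ of $\eta$, $W_{R,U}:=\{k\in\mathbb Z^N:|k|>R,\ k/|k|\in U\}$. A sequence $(g_n)$ in $\mathbb Z^N$ with $g_n\to\infty$ tends to infinity in direction $\eta$ if for every such $W_{R,U}$ there is $n_0$ with $g_n\in W_{R,U}$ for all $n\ge n_0$. $L^\eta(\omega)=\{\nu\in\Omega:\exists (g_n)$ tending to infinity in direction $\eta$ with $\alpha(g_n)(\omega)\to\nu\}$. *)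

(* Defs.v *)
From HB Require Import structures.
From mathcomp Require Import all_boot all_order all_algebra.
From mathcomp Require Import all_classical all_reals all_analysis.
Set Implicit Arguments. Unset Strict Implicit. Unset Printing Implicit Defensive.
Import Order.TTheory GRing.Theory Num.Theory.
Local Open Scope classical_set_scope.
Local Open Scope ring_scope.

Definition eucl {R : realType} {N : nat} (v : 'rV[R]_N) : R :=
  Num.sqrt (\sum_(i < N) v 0 i ^+ 2).

Definition zvec {R : realType} {N : nat} (k : 'rV[int]_N) : 'rV[R]_N :=
  map_mx (fun z : int => z%:~R) k.

Definition usphere (R : realType) (N : nat) : set 'rV[R]_N :=
  [set x | eucl x = 1].
Arguments usphere : clear implicits.

Definition sphere_open {R : realType} {N : nat} (U : set 'rV[R]_N) : Prop :=
  U `<=` usphere R N /\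
  forall x, U x -> exists2 e : R, 0 < e &
    forall y, usphere R N y -> eucl (y - x) < e -> U y.

Definition Wset {R : realType} {N : nat} (r : R) (U : set 'rV[R]_N)
  : set 'rV[int]_N :=
  [set k | r < eucl (zvec k : 'rV[R]_N) /\ U ((eucl (zvec k : 'rV[R]_N))^-1 *: zvec k)].

Definition tends_to_infty {N : nat} (g : nat -> 'rV[int]_N) : Prop :=
  forall F : set 'rV[int]_N, finite_set F -> \forall n \near \oo, ~ F (g n).

Definition tends_in_dir {R : realType} {N : nat} (eta : 'rV[R]_N)
  (g : nat -> 'rV[int]_N) : Prop :=
  tends_to_infty g /\
  forall (r : R) (U : set 'rV[R]_N), 0 < r -> sphere_open U -> U eta ->
    \forall n \near \oo, Wset r U (g n).

Definition Lset {N : nat} {Omega : topologicalType}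
  (alpha : 'rV[int]_N -> Omega -> Omega) (omega : Omega) : set Omega :=
  [set nu | exists g : nat -> 'rV[int]_N,
     tends_to_infty g /\ (fun n => alpha (g n) omega) @ \oo --> nu].

Definition Ldir {R : realType} {N : nat} {Omega : topologicalType}
  (alpha : 'rV[int]_N -> Omega -> Omega) (eta : 'rV[R]_N) (omega : Omega)
  : set Omega :=
  [set nu | exists g : nat -> 'rV[int]_N,
     tends_in_dir eta g /\ (fun n => alpha (g n) omega) @ \oo --> nu].

(* Main.v *)
Require Import Defs.
From HB Require Import structures.
From mathcomp Require Import all_boot all_order all_algebra.
From mathcomp Require Import all_classical all_reals all_analysis.
From mathcomp Require Import zify.
Import Order.TTheory GRing.Theory Num.Theory.
Import numFieldNormedType.Exports.
Local Open Scope classical_set_scope.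
Local Open Scope ring_scope.

Section Eucl.
Variables (R : realType) (N : nat).
Implicit Types (v : 'rV[R]_N).

Lemma sumsq_ge0 v : 0 <= \sum_(i < N) v 0 i ^+ 2.
Proof. by apply: sumr_ge0 => i _; rewrite sqr_ge0. Qed.

Lemma eucl_ge0 v : 0 <= eucl v.
Proof. exact: sqrtr_ge0. Qed.

Lemma eucl_sq v : eucl v ^+ 2 = \sum_(i < N) v 0 i ^+ 2.
Proof. by rewrite /eucl sqr_sqrtr // sumsq_ge0. Qed.

Lemma eucl_coord v i : `|v 0 i| <= eucl v.
Proof.
rewrite -sqrtr_sqr /eucl ler_sqrt ?sumsq_ge0 //.
rewrite (bigD1 i) //= lerDl; apply: sumr_ge0 => j _; exact: sqr_ge0.
Qed.

Lemma eucl_scale c v : eucl (c *: v) = `|c| * eucl v.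
Proof.
rewrite /eucl (eq_bigr (fun i => c ^+ 2 * v 0 i ^+ 2)); last first.
  by move=> i _; rewrite mxE exprMn.
by rewrite -mulr_sumr sqrtrM ?sqr_ge0 // sqrtr_sqr.
Qed.

Lemma eucl_unit v : 0 < eucl v -> eucl ((eucl v)^-1 *: v) = 1.
Proof.
move=> h; rewrite eucl_scale ger0_norm ?invr_ge0 ?ltW // mulVf //.
by rewrite gt_eqF.
Qed.

Lemma dir_box v i : `|((eucl v)^-1 *: v) 0 i| <= 1.
Proof.
have [h|h] := eqVneq (eucl v) 0.
  by rewrite h invr0 scale0r mxE normr0.
have hp : 0 < eucl v by rewrite lt_neqAle eq_sym h eucl_ge0.
by rewrite -(@eucl_unit v hp) eucl_coord.
Qed.

End Eucl.

Lemma finite_small (R : realType) N (r : R) :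
  finite_set [set k : 'rV[int]_N | eucl (zvec k : 'rV[R]_N) <= r].
Proof.
set M := Num.Def.archi_bound `|r|.
have hM : r < M%:R.
  exact: le_lt_trans (ler_norm r) (archi_boundP (normr_ge0 r)).
pose f := fun (v : 'rV['I_(M.*2).+1]_N) =>
  (\row_i ((v 0 i : nat)%:Z - M%:Z) : 'rV[int]_N).
apply: (@sub_finite_set _ _ (f @` setT)); last first.
  exact: finite_image.
move=> k /= hk.
have kb : forall i, `|k 0 i| < M%:Z.
  move=> i; rewrite -(ltr_int R) -[(M%:Z)%:~R]/(M%:R : R).
  rewrite intr_norm (le_lt_trans _ hM) // (le_trans _ hk) //.
  by have := @eucl_coord R N (zvec k) i; rewrite mxE.
exists (\row_i (inord (absz (k 0 i + M%:Z)) : 'I_(M.*2).+1)) => //.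
apply/matrixP => i j; rewrite !mxE; have h := kb j.
rewrite inordK; last lia.
by rewrite (ord1 i); lia.
Qed.

Lemma cvg_sumR (R : realType) (I : Type) (r : seq I) (P : pred I)
  (f : I -> nat -> R) (l : I -> R) :
  (forall i, f i n @[n --> \oo] --> l i) ->
  \sum_(i <- r | P i) f i k @[k --> \oo] --> \sum_(i <- r | P i) l i.
Proof.
move=> H; elim: r => [|a r IH].
  rewrite big_nil; under eq_fun do rewrite big_nil; exact: cvg_cst.
rewrite big_cons; under eq_fun do rewrite big_cons.
case: (P a) => //; exact: cvgD.
Qed.

Theorem lemma6p2 (R : realType) (N : nat) (Omega : pseudoMetricType R)
  (Ohaus : hausdorff_space Omega) (Ocpt : compact [set: Omega])
  (alpha : 'rV[int]_N -> Omega -> Omega)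
  (alpha_homeo : forall g, continuous (alpha g) /\
     exists beta : Omega -> Omega,
       [/\ continuous beta, cancel (alpha g) beta & cancel beta (alpha g)])
  (alpha_add : forall g h, alpha (g + h) = alpha g \o alpha h)
  (omega : Omega) :
  Lset alpha omega = \bigcup_(eta in usphere R N) Ldir alpha eta omega.
Proof.
apply/seteqP; split; last first.
  by move=> nu [eta _ [g [[gi _] gc]]]; exists g.
move=> nu [g [gi gc]].
pose d n : 'rV[R]_N := (eucl (zvec (g n) : 'rV[R]_N))^-1 *: zvec (g n).
have big r : \forall n \near \oo, r < eucl (zvec (g n) : 'rV[R]_N).
  have := gi _ (finite_small R N r); apply: filterS => n /=.
  by move/negP; rewrite -ltNge.
have cpt := @rV_compact R N (fun=> `[-1, 1]%classic) (fun=> @segment_compact R (-1) 1).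
have FB : (d @ \oo) [set v : 'rV[R]_N | forall i, `[-1, 1]%classic (v ord0 i)].
  exists 0%N => // n _ i /=; rewrite in_itv /= -ler_norml; exact: dir_box.
have [eta [etaB cl]] := cpt (d @ \oo) _ FB.
have close (e : R) (M : nat) : 0 < e -> exists n, (M <= n)%N /\
    forall i, `|eta 0 i - d n 0 i| < e.
  move=> e0.
  have [_ [[n hn <-] hb]] := cl [set d n | n in [set n | (M <= n)%N]]
    (ball eta e) (ltac:(by exists M => // n /= hn; exists n)) (nbhsx_ballx eta e e0).
  exists n; split => // i.
  by case: hb => _ /(_ 0 i); rewrite -ball_normE.
have [c hc] := choice (fun (p : nat * nat) => close p.1.+1%:R^-1 p.2
  (ltac:(by rewrite invr_gt0 ltr0n))).
pose phi := fix phi k := if k is k'.+1 then c (k, (phi k').+1) else c (0%N, 0%N).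
have phi_ge k : (k <= phi k)%N.
  elim: k => [|k IH] //=.
  by case: (hc (k.+1, (phi k).+1)) => /= h _; apply: leq_trans h; rewrite ltnS.
have phi_close k i : `|eta 0 i - d (phi k) 0 i| < k.+1%:R^-1.
  by case: k => [|k] /=; [case: (hc (0%N, 0%N)) => _ /(_ i) | case: (hc (k.+1, (phi k).+1)) => _ /(_ i)].
have phi_inf : phi @ \oo --> \oo.
  move=> A [M _ HA]; exists M => // k /= hk; apply: HA.
  exact: leq_trans hk (phi_ge k).
have hco i : d (phi k) 0 i @[k --> \oo] --> eta 0 i.
  apply/cvgrPdist_lt => e e0; near=> k.
  apply: (lt_trans (phi_close k i)); near: k.
  by have := @near_infty_natSinv_lt R (PosNum e0).
have hs1 : \sum_(i < N) d (phi k) 0 i ^+ 2 @[k --> \oo] --> \sum_(i < N) eta 0 i ^+ 2.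
  apply: cvg_sumR => i; under eq_fun do rewrite expr2.
  rewrite expr2; exact: cvgM.
have hs2 : \sum_(i < N) d (phi k) 0 i ^+ 2 @[k --> \oo] --> (1 : R).
  apply: cvg_trans (cvg_cst (1 : R)).
  apply: (near_eq_cvg (f := fun=> (1:R))).
  have hb0 : \forall k \near \oo, 0 < eucl (zvec (g (phi k)) : 'rV[R]_N) := phi_inf _ (big 0).
  apply: filterS hb0 => k /= hk.
  by rewrite -eucl_sq eucl_unit // expr1n.
  exact: eventually_filter.
have etaS : usphere R N eta.
  rewrite /usphere /= /eucl.
  by rewrite -(cvg_lim _ hs1) // (cvg_lim _ hs2) // sqrtr1.
have hdist : eucl (d (phi k) - eta) @[k --> \oo] --> (0 : R).
  have h0 : \sum_(i < N) (d (phi k) - eta) 0 i ^+ 2 @[k --> \oo] --> (0 : R).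
    have E : \sum_(i < N) (eta 0 i - eta 0 i) ^+ 2 = 0 :> R.
      by rewrite big1 // => i _; rewrite subrr expr0n.
    rewrite -[X in _ --> X]E.
    apply: cvg_sumR => i.
    have hi : (fun k => d (phi k) 0 i - eta 0 i) @ \oo --> eta 0 i - eta 0 i.
      by apply: cvgB => //; exact: cvg_cst.
    have -> : (fun k => (d (phi k) - eta) 0 i ^+ 2) =
      (fun k => (d (phi k) 0 i - eta 0 i) * (d (phi k) 0 i - eta 0 i)).
      by apply/funext => k; rewrite !mxE expr2.
    rewrite expr2; exact: (cvgM hi hi).
  rewrite -sqrtr0; exact: (cvg_comp _ _ h0 (@sqrt_continuous R 0)).
exists eta => //; exists (g \o phi); split; last first.
  exact: (cvg_comp _ _ phi_inf gc).
split.
  by move=> F fF; exact: phi_inf _ (gi F fF).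
move=> r U r0 [Usub Uop] Ueta.
have [e e0 He] := Uop eta Ueta.
have h2 : \forall k \near \oo, eucl (d (phi k) - eta) < e.
  move/cvgrPdist_lt: hdist => /(_ e e0); apply: filterS => k.
  by rewrite sub0r normrN ger0_norm // eucl_ge0.
have h1 : \forall k \near \oo, r < eucl (zvec (g (phi k)) : 'rV[R]_N) := phi_inf _ (big r).
near=> k; split => /=; first by near: k.
apply: He; last by near: k.
rewrite /usphere /= eucl_unit //; apply: lt_trans r0 _; near: k; exact: h1.
Unshelve. all: by end_near.
Qed.
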